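(* Let $Q$ be a quadrangulation with a strong labeling, with edges colored and oriented as induced by the labeling. If $v$ is a white (respectively black) vertex and $uv$ is an edge oriented towards $v$, then the outgoing edge at $v$ having the same color as $uv$ is the next outgoing edge to the right (respectively left) of $uv$, i.e. the first outgoing edge met when rotating around $v$ starting from $uv$ counterclockwise (respectively clockwise).
   Context: A quadrangulation is a simple plane graph with at least four vertices all of whose faces (including the outer face) are bounded by $4$-cycles; it is bipartite, and its vertices are properly colored black and white. An angle is an incidence of a vertex with a face. A strong labeling of $Q$ is a map from the angles of $Q$ to $\{0,1\}$ such that: (G0) the two black vertices on the outer face are named $s_0$ and $s_1$, and all angles at $s_i$ are labeled $i$; (G1) for each vertex $v\notin\{s_0,s_1\}$ the labels around $v$ form one non-empty cyclic interval of $1$s and one non-empty cyclic interval of $0$s; (G2) for each edge, the two labels on the two sides of the edge coincide at one endpoint and differ at the other; (G3) the labels in each bounded face, read cyclically, are $0,0,1,1$, and reading the labels of the outer face in clockwise order starting at $s_0$ they are $0,0,1,1$. The labeling induces a coloring and orientation of the edges: each edge is colored with the common label at the endpoint where its two labels coincide and is oriented towards that endpoint. *)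

(* Defs.v *)
(* Plane graphs are represented combinatorially as plane maps
   (rotation systems) on a finite set of darts (half-edges). *)
From mathcomp Require Import all_boot fingroup perm.
Set Implicit Arguments. Unset Strict Implicit. Unset Printing Implicit Defensive.

Section Maps.
Variables (D V : finType).
Variables (sigma alpha : {perm D}) (vert : D -> V).

(* Conventions:
   - [alpha d] is the reverse of dart [d] (same edge, other endpoint);
   - [vert d] is the vertex at the tail of dart [d];
   - [sigma d] is the next dart counterclockwise around [vert d];
   - [phi d := sigma (alpha d)] is the face permutation. *)
Definition phi : {perm D} := (alpha * sigma)%g.

Definition map_rel : rel D := fun x y => (y == sigma x) || (y == alpha x).

Definition same_face (d d' : D) : bool := fconnect phi d d'.

Definition quadrangulation : Prop :=
  [/\ (forall d, alpha (alpha d) = d /\ alpha d != d),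
      (forall d d', (vert d == vert d') = fconnect sigma d d'),
      (forall x : V, exists d, vert d = x) &
      (forall d d', connect map_rel d d')] /\
  [/\
      (* genus 0 (Euler's formula V - E + F = 2) *)
      (#|V| + fcard phi D) * 2 = #|D| + 4,
      (forall d, vert (alpha d) != vert d) /\
      (forall d d', vert d = vert d' -> vert (alpha d) = vert (alpha d') -> d = d'),
      4 <= #|V| &
      (forall d, size (orbit phi d) = 4 /\ uniq (map vert (orbit phi d)))].

Definition proper_coloring (black : V -> bool) : Prop :=
  forall d, black (vert d) != black (vert (alpha d)).

(* The angle (vertex-face incidence) represented by dart [d] is the
   corner at [vert d] between [d] and the next dart [sigma d] counterclockwise;
   it lies in the face of [alpha d] (i.e. of [sigma d]). In a quadrangulation
   this is a bijection between darts and angles. A labeling is a map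
   [lab : D -> bool] (false = 0, true = 1). *)

Definition face_labels (lab : D -> bool) (e : D) : seq bool :=
  [seq lab (alpha x) | x <- orbit phi e].

Definition strong_labeling (black : V -> bool) (o : D) (s0 s1 : V)
    (lab : D -> bool) : Prop :=
  [/\
      [/\ black s0 /\ black s1 /\ s0 != s1,
          (exists d, same_face o d /\ vert d = s0),
          (exists d, same_face o d /\ vert d = s1) &
          (forall d, (vert d = s0 -> lab d = false) /\ (vert d = s1 -> lab d = true))],
      (forall x : V, x != s0 -> x != s1 ->
         exists d, vert d = x /\
           exists k, 0 < k < fingraph.order sigma d /\
             forall i, i < fingraph.order sigma d -> lab (iter i sigma d) = (i < k)),
      (* (G2) the labels on the two sides of an edge coincide at exactly one end;
         the two sides of dart d at vert d are the angles d and sigma^-1 d *)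
      (forall d, (lab d == lab ((sigma^-1)%g d))
                 != (lab (alpha d) == lab ((sigma^-1)%g (alpha d)))),
      (forall e, ~~ same_face o e ->
         exists i, rot i (face_labels lab e) = [:: false; false; true; true]) &
      (* (G3) outer face read clockwise (= along phi^-1) from s0 is 0,0,1,1 *)
      (exists e0, same_face o e0 /\ vert (alpha e0) = s0 /\
         [seq lab (alpha (iter i (phi^-1)%g e0)) | i <- iota 0 4]
           = [:: false; false; true; true])].

(* induced orientation and coloring: the edge of dart [d] is oriented towards
   [vert d] iff its two side labels coincide at [vert d] *)
Definition towards (lab : D -> bool) (d : D) : bool :=
  lab d == lab ((sigma^-1)%g d).

(* color of the edge of [d]: the common label at the endpoint where they coincide *)
Definition ecolor (lab : D -> bool) (d : D) : bool :=
  if towards lab d then lab d else lab (alpha d).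

Definition next_outgoing (lab : D -> bool) (r : {perm D}) (e e' : D) : Prop :=
  exists k, 0 < k /\ e' = iter k r e /\ ~~ towards lab e' /\
    forall j, 0 < j < k -> towards lab (iter j r e).

End Maps.

(* Main.v *)
Require Import Defs.
From mathcomp Require Import all_boot fingroup perm zify.

Definition g4 (a b c d : bool) : bool :=
  [:: a; b; c; d] \in [:: [:: false; false; true; true]; [:: false; true; true; false];
                         [:: true; true; false; false]; [:: true; false; false; true]].

Lemma g4_rot a b c d : (exists i, rot i [:: a; b; c; d] = [:: false; false; true; true]) -> g4 a b c d.
Proof.
case=> [[|[|[|[|i]]]]]; last (rewrite rot_oversize //); 
  by rewrite /rot /=; case=> -> -> -> ->.
Qed.

Lemma keyK (D V : finType) (sigma alpha : {perm D}) (vert : D -> V)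
    (black : V -> bool) (o : D) (s0 s1 : V) (lab : D -> bool)
    (HQ : quadrangulation sigma alpha vert)
    (Hcol : proper_coloring alpha vert black)
    (HL : strong_labeling sigma alpha vert black o s0 s1 lab) :
  forall y, (lab y == lab (alpha (sigma y))) = ~~ black (vert y).
Proof.
case: HQ => [[Halpha Hvert Hsurj Hconn] [Heuler [Hloop Hsimple] H4 Hface]].
case: HL => [[[Hb0 [Hb1 Hs01]] Ho0 Ho1 Hlab0] HG1 HG2 HG3 [e0 [Hoe0 [Hve0 Hout]]]].
have aa : forall x, alpha (alpha x) = x by move=> x; case: (Halpha x).
have vs : forall z, vert (sigma z) = vert z.
  by move=> z; apply/esym/eqP; rewrite Hvert fconnect1.
have vsV : forall z, vert ((sigma^-1)%g z) = vert z.
  by move=> z; rewrite -{2}(permKV sigma z) vs.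
have phiE : forall x, phi sigma alpha x = sigma (alpha x) by move=> x; rewrite /phi permM.
pose nxt y := alpha (sigma y).
have anxt : forall x, alpha (phi sigma alpha x) = nxt (alpha x) by move=> x; rewrite phiE.
have ord4 : forall x, fingraph.order (phi sigma alpha) x = 4.
  by move=> x; rewrite -size_orbit; case: (Hface x) => ->.
have phi4 : forall x, iter 4 (phi sigma alpha) x = x.
  by move=> x; rewrite -{1}(ord4 x) iter_order //; apply: perm_inj.
have nxt4 : forall y, nxt (nxt (nxt (nxt y))) = y.
  by move=> y; have := congr1 alpha (phi4 (alpha y)); rewrite /= !anxt !aa.
have FL : forall y, face_labels sigma alpha lab (alpha y) =
   [:: lab y; lab (nxt y); lab (nxt (nxt y)); lab (nxt (nxt (nxt y)))].
  by move=> y; rewrite /face_labels /orbit ord4 /= !anxt aa.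
pose good y := g4 (lab y) (lab (nxt y)) (lab (nxt (nxt y))) (lab (nxt (nxt (nxt y)))).
have goodn : forall y, good y -> good (nxt y).
  move=> y; rewrite /good nxt4.
  by case: (lab y); case: (lab (nxt y)); case: (lab (nxt (nxt y))); case: (lab (nxt (nxt (nxt y)))).
have iterphi : forall j x, alpha (iter j (phi sigma alpha) x) = iter j nxt (alpha x).
  by elim=> [|j IH] x //=; rewrite anxt IH.
have phiV : forall x, phi sigma alpha ((phi sigma alpha)^-1%g x) = x by move=> x; rewrite permKV.
have goode0 : good (alpha e0).
  move: Hout; rewrite /= /good.
  set p := (phi sigma alpha).
  have e1 : p e0 = (p^-1)%g ((p^-1)%g ((p^-1)%g e0)).
    by rewrite -{1}(phi4 ((p^-1)%g ((p^-1)%g ((p^-1)%g e0)))) /= !permKV.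
  have e2 : p (p e0) = (p^-1)%g ((p^-1)%g e0).
    by rewrite -{1}(phi4 ((p^-1)%g ((p^-1)%g e0))) /= !permKV.
  have e3 : p (p (p e0)) = (p^-1)%g e0.
    by rewrite -{1}(phi4 ((p^-1)%g e0)) /= !permKV.
  have := anxt; rewrite -/p => an.
  rewrite -!an e3 e2 e1.
  by case=> -> -> -> ->.
have goodall : forall y, good y.
  move=> y; case: (boolP (same_face sigma alpha o (alpha y))) => Hs.
    have : fconnect (phi sigma alpha) e0 (alpha y).
      apply: connect_trans (Hs); rewrite fconnect_sym //; first exact: perm_inj.
    move/iter_findex; set j := findex _ _ _ => Hj.
    rewrite -[y]aa -Hj iterphi.
    by elim: j {Hj} => [|j IH] //=; apply: goodn.
  by rewrite /good; apply: g4_rot; rewrite -FL; apply: HG3.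
pose Wy y := (lab y == lab (nxt y)) == ~~ black (vert y).
have colnxt : forall y, black (vert (nxt y)) = ~~ black (vert y).
  move=> y; have := Hcol (sigma y); rewrite vs /nxt.
  by case: (black (vert y)); case: (black _).
have WF : forall y, Wy (nxt y) = Wy y.
  move=> y; have := goodall y; rewrite /Wy /good colnxt /g4.
  case: (lab y); case: (lab (nxt y)); case: (lab (nxt (nxt y))); case: (lab (nxt (nxt (nxt y))));
  by case: (black (vert y)).
have WE : forall y, Wy ((sigma^-1)%g (alpha (sigma y))) = Wy y.
  move=> y; have := HG2 (sigma y); rewrite /Wy /nxt vsV permKV aa.
  have := Hcol (sigma y); rewrite vs permK.
  case: (lab y); case: (lab (sigma y)); case: (lab (alpha (sigma y)));
  case: (lab ((sigma^-1)%g (alpha (sigma y)))); case: (black (vert y)); by case: (black _).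
have WS : forall w, Wy ((sigma^-1)%g w) = Wy w.
  move=> w; have := WE ((sigma^-1)%g (alpha w)); have := WF ((sigma^-1)%g (alpha w)).
  by rewrite /nxt permKV aa => -> ->.
have WA : forall w, Wy (alpha w) = Wy w.
  by move=> w; have := WF ((sigma^-1)%g w); rewrite /nxt permKV => ->; apply: WS.
have Wcl : closed (map_rel sigma alpha) [pred y | Wy y].
  move=> x y /orP [] /eqP -> ; rewrite !inE /=; last by rewrite WA.
  by rewrite -(WS (sigma x)) permK.
pose y0 := alpha ((phi sigma alpha)^-1%g e0).
have Wy0 : Wy y0.
  have sy0 : sigma y0 = e0 by rewrite /y0 -phiE permKV.
  move: Hout => /= [H0 H1 _].
  rewrite /Wy /nxt sy0 H0.
  have : lab y0 = false by rewrite /y0.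
  move=> ->; have := Hcol e0; rewrite Hve0 Hb0 -(vs y0) sy0.
  by case: (black (vert e0)).
move=> y; have := closed_connect Wcl (Hconn y0 y); rewrite !inE Wy0 => /esym.
by rewrite /Wy /nxt => /eqP.
Qed.

Ltac keep_arith :=
  repeat match goal with
  | H : ?P |- _ =>
     lazymatch P with
     | is_true _ => fail
     | @eq nat _ _ => fail
     | _ => clear H
     end
  end.
Ltac nlia := keep_arith; lia.

Theorem lemma11 (D V : finType) (sigma alpha : {perm D}) (vert : D -> V)
    (black : V -> bool) (o : D) (s0 s1 : V) (lab : D -> bool)
    (HQ : quadrangulation sigma alpha vert)
    (Hcol : proper_coloring alpha vert black)
    (HL : strong_labeling sigma alpha vert black o s0 s1 lab)
    (v : V) (e : D) (He : vert e = v) (Hin : towards sigma lab e) :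
  let r := if black v then (sigma^-1)%g else sigma in
  (forall e', vert e' = v -> ~~ towards sigma lab e' ->
     ecolor sigma alpha lab e' = ecolor sigma alpha lab e ->
     next_outgoing sigma lab r e e') /\
  (v != s0 -> v != s1 ->
     exists e', [/\ vert e' = v, ~~ towards sigma lab e' &
                    ecolor sigma alpha lab e' = ecolor sigma alpha lab e]).
Proof.
move=> r.
have K := @keyK _ _ _ _ _ _ _ _ _ _ HQ Hcol HL.
case: HQ => [[Halpha Hvert Hsurj Hconn] _].
case: HL => [[[Hb0 [Hb1 Hs01]] _ _ Hlab0] HG1 HG2 _ _].
have aa : forall x, alpha (alpha x) = x by move=> x; case: (Halpha x).
have vs : forall z, vert (sigma z) = vert z.
  by move=> z; apply/esym/eqP; rewrite Hvert fconnect1.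
have vsV : forall z, vert ((sigma^-1)%g z) = vert z.
  by move=> z; rewrite -{2}(permKV sigma z) vs.
have Hs : forall z, vert z = s0 \/ vert z = s1 -> towards sigma lab z.
  move=> z [] Hz; rewrite /towards.
    by rewrite (proj1 (Hlab0 z) Hz) (proj1 (Hlab0 _)) // vsV.
  by rewrite (proj2 (Hlab0 z) Hz) (proj2 (Hlab0 _)) // vsV.
case: (boolP (v == s0)) => [/eqP Hv0|Hv0].
  split; last by rewrite Hv0 ?eqxx.
  by move=> e' He' /negP[]; apply: Hs; left; rewrite He'.
case: (boolP (v == s1)) => [/eqP Hv1|Hv1].
  split; last by rewrite Hv1 ?eqxx.
  by move=> e' He' /negP[]; apply: Hs; right; rewrite He'.
have [d [Hd [k [/andP [k0 kn] Hlk]]]] := HG1 v Hv0 Hv1.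
set n := fingraph.order sigma d in kn Hlk.
have vi : forall i, vert (iter i sigma d) = v.
  by elim=> [|i IH] //=; rewrite vs.
have idx : forall z, vert z = v -> exists2 i, i < n & z = iter i sigma d.
  move=> z Hz; have Hc : fconnect sigma d z by rewrite -Hvert Hd Hz.
  by exists (findex sigma d z); [apply: findex_max | rewrite iter_findex].
have itn : iter n sigma d = d by rewrite /n iter_order //; apply: perm_inj.
have predS : forall i, (sigma^-1)%g (iter i.+1 sigma d) = iter i sigma d.
  by move=> i; rewrite iterS permK.
have pred0 : (sigma^-1)%g d = iter n.-1 sigma d.
  by rewrite -{1}itn -(ltn_predK kn) predS.
have tw : forall i, i < n -> towards sigma lab (iter i sigma d) = (i != 0) && (i != k).
  case=> [|j] jn; rewrite /towards.
    rewrite /= pred0 (Hlk n.-1); last nlia.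
    rewrite -[d in lab d]/(iter 0 sigma d) Hlk; last nlia.
    have -> : (n.-1 < k) = false by apply/negbTE; rewrite -leqNgt; nlia.
    by rewrite k0.
  rewrite predS !Hlk; [|nlia|nlia] => /=.
  by case: (ltngtP j.+1 k).
have col0 : lab (alpha d) = black v.
  have := K ((sigma^-1)%g d); rewrite permKV vsV Hd pred0 Hlk; last by nlia.
  have -> : (n.-1 < k) = false by apply/negbTE; rewrite -leqNgt; nlia.
  by case: (lab _); case: (black v).
have colk : lab (alpha (iter k sigma d)) = ~~ black v.
  have := K (iter k.-1 sigma d); rewrite -iterS (ltn_predK k0) vi Hlk; last by nlia.
  rewrite (_ : k.-1 < k); last by nlia.
  by case: (lab _); case: (black v).
have itV : forall t m, t <= m -> iter t (sigma^-1)%g (iter m sigma d) = iter (m - t) sigma d.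
  elim=> [|t IH] m tm; first by rewrite subn0.
  rewrite iterS IH; last by nlia.
  by rewrite (_ : m - t = (m - t.+1).+1) ?predS //; nlia.
have [j jn Hej] := idx e He.
have Hj : (j != 0) && (j != k) by rewrite -tw // -Hej.
have ece : ecolor sigma alpha lab e = (j < k) by rewrite /ecolor Hin Hej Hlk.
rewrite ece; split; last first.
  move=> _ _; case: (boolP ((j < k) == ~~ black v)) => [/eqP Hb|Hb].
    exists (iter k sigma d); split => //; first by rewrite tw // eqxx andbF.
    by rewrite /ecolor tw // eqxx andbF colk.
  exists d; split => //; first by rewrite (tw 0) //; nlia.
  rewrite /ecolor (tw 0) /=; last nlia.
  by rewrite col0; move: Hb; case: (j < k); case: (black v).
move=> e' He' Hout Hc.
have [j' jn' Hej'] := idx e' He'.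
move: Hout Hc; rewrite Hej' tw // => Hout.
rewrite /ecolor tw // (negbTE Hout).
have [->|->] : j' = 0 \/ j' = k by move: Hout; case: eqP => [->|_]; [left|case: eqP => [->|_]; [right|]].
- rewrite col0 /r => Hb; case: ifP Hb => Hbv Hb.
  + have jk : j < k by rewrite -Hb.
    exists j; split; first by nlia.
    split; first by rewrite Hej itV // subnn.
    split; first by rewrite (tw 0) //; nlia.
    move=> t /andP [t0 tj]; rewrite Hej itV; last by nlia.
    rewrite tw; nlia.
  + have jk : ~~ (j < k) by rewrite -Hb.
    exists (n - j); split; first by nlia.
    split; first by rewrite Hej -iterD subnK ?itn //; nlia.
    split; first by rewrite (tw 0) //; nlia.
    move=> t /andP [t0 tj]; rewrite Hej -iterD tw; nlia.
- rewrite colk /r => Hb; case: ifP Hb => Hbv /= Hb.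
  + have jk : ~~ (j < k) by rewrite -Hb.
    exists (j - k); split; first by nlia.
    split; first by rewrite Hej itV ?subKn //; nlia.
    split; first by rewrite tw // eqxx andbF.
    move=> t /andP [t0 tj]; rewrite Hej itV; last by nlia.
    rewrite tw; nlia.
  + have jk : j < k by rewrite -Hb.
    exists (k - j); split; first by nlia.
    split; first by rewrite Hej -iterD subnK //; nlia.
    split; first by rewrite tw // eqxx andbF.
    move=> t /andP [t0 tj]; rewrite Hej -iterD tw; nlia.
Qed.
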